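(* Let $X$ be a random variable with values in $\{x_1,\ldots,x_N\}$. Let $A\geq16$ be such that $\mathbb{P}[X=x_i]\geq\frac1A$ for all $i\in[N]$. Let $J\subseteq\{x_1,\ldots,x_N\}$ and let $\mathcal{E}$ be the event that $X\in J$. Suppose $\mathbb{P}[\mathcal{E}]\geq1-a$ for some $0\leq a\leq\frac12$. Then $H(X)-H(X\mid\mathcal{E})\leq 2a\log A$.
   Context: $\log=\log_2$. For a discrete random variable $X$ with outcomes $x_1,\dots,x_N$ and $p_i=\mathbb{P}[X=x_i]$, $H(X)=-\sum_i p_i\log p_i$ (with $0\log0:=0$). For an event $\mathcal{E}$ of positive probability and $p_i'=\mathbb{P}[X=x_i\mid\mathcal{E}]$, $H(X\mid\mathcal{E})=-\sum_i p_i'\log p_i'$. *)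

(* Defs.v *)
From mathcomp Require Import all_boot all_order all_algebra.
From mathcomp Require Import reals exp.
Set Implicit Arguments. Unset Strict Implicit. Unset Printing Implicit Defensive.
Import Order.TTheory GRing.Theory Num.Theory.
Local Open Scope ring_scope.

Definition log2 {R : realType} (x : R) : R := ln x / ln 2.

Definition xlog2x {R : realType} (x : R) : R := if x == 0 then 0 else x * log2 x.

(* Shannon entropy of a distribution p on outcomes 'I_N (p i = P[X = x_i]) *)
Definition entropy {R : realType} {N : nat} (p : 'I_N -> R) : R :=
  - \sum_(i < N) xlog2x (p i).

Definition probE {R : realType} {N : nat} (p : 'I_N -> R) (J : {set 'I_N}) : R :=
  \sum_(i in J) p i.

Definition condp {R : realType} {N : nat} (p : 'I_N -> R) (J : {set 'I_N})
  (i : 'I_N) : R := if i \in J then p i / probE p J else 0.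

Definition cond_entropy {R : realType} {N : nat} (p : 'I_N -> R) (J : {set 'I_N}) : R :=
  entropy (condp p J).

(* Main.v *)
Require Import Defs.
From mathcomp Require Import all_boot all_order all_algebra.
From mathcomp Require Import reals exp.
From mathcomp Require Import ring lra.
Import Order.TTheory GRing.Theory Num.Theory.
Local Open Scope ring_scope.

Lemma ln_ge_inv (R : realType) (q : R) : 0 < q -> - ln q <= q^-1 - 1.
Proof.
move=> q0; rewrite -lnV ?posrE //.
have := @le_ln1Dx R (q^-1 - 1); rewrite [1 + _]addrC subrK; apply.
by rewrite ltrBrDl addrN invr_gt0.
Qed.

Lemma ln2_ge (R : realType) : 2^-1 <= ln (2 : R).
Proof.
have h := @le_ln1Dx R (- 2^-1).
have e : 1 + - 2^-1 = (2:R)^-1 by field.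
rewrite e lnV ?posrE in h; last by lra.
have h3 : -1 < - (2:R)^-1 by lra.
have := h h3; lra.
Qed.

Theorem lemma3p1 (R : realType) (N : nat) (p : 'I_N -> R) (A a : R)
  (J : {set 'I_N})
  (hp0 : forall i, 0 <= p i)
  (hp1 : \sum_(i < N) p i = 1)
  (hA : 16 <= A)
  (hpA : forall i, A^-1 <= p i)
  (ha0 : 0 <= a) (ha1 : a <= 2^-1)
  (hE : 1 - a <= probE p J) :
  entropy p - cond_entropy p J <= 2 * a * log2 A.
Proof.
have A0 : 0 < A.
  lra.
have pp i : 0 < p i by apply: lt_le_trans (hpA i); rewrite invr_gt0.
have p1 i : p i <= 1.
  rewrite -hp1 (bigD1 i) //= lerDl; apply: sumr_ge0 => j _; exact: hp0.
set q := probE p J in hE *.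
have q0 : 2^-1 <= q by lra.
have qpos : 0 < q by apply: lt_le_trans q0; rewrite invr_gt0.
have q1 : q <= 1.
  rewrite -hp1 /q /probE [X in _ <= X](bigID (fun i => i \in J)) /= lerDl.
  apply: sumr_ge0 => j _; exact: hp0.
have ln2p : 0 < ln (2 : R) by apply: ln_gt0; lra.
have lnA2 : 2 <= ln A.
  have e : (2:R) ^+ 4 = 16 by rewrite -natrX.
  have := ln2_ge R => h.
  apply: (@le_trans _ _ (ln (2 ^+ 4))); last by rewrite ler_ln ?posrE ?e //; lra.
  have h2 : (0:R) < 2 by lra.
  rewrite (lnXn 4 h2) -[_ *+ 4]mulr_natl; lra.
set f := fun i => p i * ln (p i).
have xf i : xlog2x (p i) = f i / ln 2.
  by rewrite /xlog2x (negPf (lt0r_neq0 (pp i))) /log2 /f mulrA.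
have Hent : entropy p = - (\sum_(i in J) f i + \sum_(i in ~: J) f i) / ln 2.
  rewrite /entropy (eq_bigr _ (fun i _ => xf i)) -mulr_suml mulNr.
  rewrite (bigID (fun i => i \in J)) /=; congr (- ((_ + _) / _)).
  by apply: eq_bigl => i; rewrite in_setC.
have Hcond : cond_entropy p J = - ((\sum_(i in J) f i) / q - ln q) / ln 2.
  rewrite /cond_entropy /entropy (bigID (fun i => i \in J)) /=.
  rewrite [X in _ + X]big1 ?addr0; last first.
    by move=> i /negPf iJ; rewrite /condp iJ /xlog2x eqxx.
  have -> : \sum_(i | i \in J) xlog2x (condp p J i) =
      \sum_(i in J) (f i / q - ln q * p i / q) / ln 2.
    apply: eq_bigr => i iJ; rewrite /condp iJ /xlog2x.
    have pq : 0 < p i / q by rewrite divr_gt0.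
    rewrite (negPf (lt0r_neq0 pq)) /log2 ln_div ?posrE // /f.
    rewrite -/q; field; apply/andP; split; apply: lt0r_neq0 => //.
  rewrite -mulr_suml sumrB -!mulr_suml -mulr_sumr.
  have -> : \sum_(i in J) p i = q by [].
  field; apply/andP; split; apply: lt0r_neq0 => //.
rewrite Hent Hcond /log2.
set SJ := \sum_(i in J) f i.
set SN := \sum_(i in ~: J) f i.
have SJ0 : SJ <= 0.
  rewrite /SJ -oppr_ge0 -sumrN; apply: sumr_ge0 => i _.
  rewrite oppr_ge0 /f; apply: mulr_ge0_le0 => //; exact: ln_le0.
have HN : - SN <= (1 - q) * ln A.
  have -> : 1 - q = \sum_(i in ~: J) p i.
    rewrite -hp1 /q /probE (bigID (fun i => i \in J)) /= addrC addrK.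
    by apply: eq_bigl => i; rewrite in_setC.
  rewrite /SN -sumrN mulr_suml; apply: ler_sum => i _.
  rewrite /f -mulrN ler_wpM2l // -lnV ?posrE // ler_ln ?posrE ?invr_gt0 //.
  by rewrite -(invrK A) lef_pV2 ?posrE ?invr_gt0.
have Hq : - ln q <= 2 * (1 - q).
  have hq := @ln_ge_inv _ q qpos.
  have h : q^-1 <= 2.
    by rewrite -(invrK 2) lef_pV2 ?posrE ?invr_gt0.
  have e : q^-1 - 1 = (1 - q) * q^-1 by field; apply: lt0r_neq0.
  have h3 : (1 - q) * q^-1 <= (1 - q) * 2 by rewrite ler_wpM2l //; lra.
  lra.
have HJ : SJ / q - SJ <= 0.
  have -> : SJ / q - SJ = SJ * (q^-1 - 1) by ring.
  apply: mulr_le0_ge0 => //; rewrite subr_ge0 invf_ge1 //.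
rewrite mulrA -mulrBl ler_pM2r ?invr_gt0 //.
have h1 : (1 - q) * ln A <= a * ln A by rewrite ler_wpM2r //; lra.
have h2 : (1 - q) * 2 <= a * ln A.
  apply: le_trans (_ : a * 2 <= _); first by rewrite ler_wpM2r //; lra.
  by rewrite ler_wpM2l.
lra.
Qed.
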